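(* Let $k \geq 2$ be an integer, let $u_1, \dots, u_k \in \mathbb{R}$ be real numbers that are not all equal, and let $c_1, \dots, c_k \in \mathbb{R}$. Let $(a, b) \in \mathbb{R}^2$ be a solution of the optimization problem $$\min_{a, b \in \mathbb{R}} \sum_{i=1}^k (a u_i + b + c_i)^2 .$$ Then $$a \leq \zeta(\mathbf{u}) \max_{1 \leq i \leq k} |c_i| \qquad \text{and} \qquad b = -\frac{1}{k}\sum_{i=1}^k c_i - \frac{a}{k}\sum_{i=1}^k u_i,$$ where $\zeta(\mathbf{u}) = \dfrac{2\sum_{1 \leq i<j \leq k}|u_i-u_j|}{\sum_{1 \leq i<j \leq k}(u_i-u_j)^2}$.
   Context: $\mathbf{u} = (u_1, \dots, u_k)$ denotes the vector of the given constants $u_i$. *)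

(* Defs.v *)
From mathcomp Require Import all_boot all_order all_algebra.
From mathcomp Require Import reals.
Set Implicit Arguments. Unset Strict Implicit. Unset Printing Implicit Defensive.
Import Order.TTheory GRing.Theory Num.Theory.
Local Open Scope ring_scope.

Definition lsq_obj (R : realType) (k : nat) (u c : 'I_k -> R) (a b : R) : R :=
  \sum_(i < k) (a * u i + b + c i) ^+ 2.

Definition zeta (R : realType) (k : nat) (u : 'I_k -> R) : R :=
  (2 * \sum_(i < k) \sum_(j < k | (i < j)%N) `|u i - u j|) /
  (\sum_(i < k) \sum_(j < k | (i < j)%N) (u i - u j) ^+ 2).

(* max_{1<=i<=k} |c_i| (nonnegative values, so 0 is a neutral element). *)
Definition max_abs (R : realType) (k : nat) (c : 'I_k -> R) : R :=
  \big[Num.max/0]_(i < k) `|c i|.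

(* Main.v *)
Require Import Defs.
From mathcomp Require Import all_boot all_order all_algebra.
From mathcomp Require Import reals.
From mathcomp Require Import ring lra.
Import Order.TTheory GRing.Theory Num.Theory.
Local Open Scope ring_scope.

Lemma max_abs_ge (R : realType) k (c : 'I_k -> R) i : `|c i| <= max_abs c.
Proof.
rewrite /max_abs.
have : i \in index_enum 'I_k by rewrite mem_index_enum.
elim: (index_enum 'I_k) => [//|x r IH]; rewrite inE big_cons.
case/orP=> [/eqP->|/IH h]; rewrite le_max ?lexx //.
by rewrite h orbT.
Qed.

Lemma max_abs_ge0 (R : realType) k (c : 'I_k -> R) : 0 <= max_abs c.
Proof.
rewrite /max_abs; elim: (index_enum 'I_k) => [|x r IH]; rewrite ?big_nil ?big_cons //.
by rewrite le_max IH orbT.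
Qed.

Lemma sum_sq_shift (R : realType) k (x y : 'I_k -> R) t :
  \sum_(i < k) (x i + t * y i) ^+ 2 =
  \sum_(i < k) x i ^+ 2 + 2 * t * \sum_(i < k) x i * y i + t ^+ 2 * \sum_(i < k) y i ^+ 2.
Proof.
rewrite !mulr_sumr -!big_split /=; apply: eq_bigr => i _; ring.
Qed.

Lemma quad0 (R : realType) (S Q : R) : 0 < Q -> (forall t, 0 <= 2 * t * S + t ^+ 2 * Q) -> S = 0.
Proof.
move=> hQ h; have := h (- S / Q).
have e : 2 * (- S / Q) * S + (- S / Q) ^+ 2 * Q = - (S ^+ 2 / Q).
  by field; rewrite gt_eqF.
rewrite e oppr_ge0 => h2.
have : S ^+ 2 / Q >= 0 by rewrite divr_ge0 ?sqr_ge0 ?ltW.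
move=> h3; have : S ^+ 2 / Q = 0 by apply/eqP; rewrite eq_le h2 h3.
move/eqP; rewrite mulf_eq0 invr_eq0 (gt_eqF hQ) orbF expf_eq0 /=.
by move/eqP.
Qed.

Lemma half_sum (R : realType) k (f : 'I_k -> 'I_k -> R) :
  (forall i j, f i j = f j i) -> (forall i, f i i = 0) ->
  \sum_(i < k) \sum_(j < k) f i j = 2 * \sum_(i < k) \sum_(j < k | (i < j)%N) f i j.
Proof.
move=> hs hd.
have e : forall i, \sum_(j < k) f i j = \sum_(j < k | (i < j)%N) f i j + \sum_(j < k | (j < i)%N) f i j.
  move=> i; rewrite (bigID (fun j : 'I_k => (i < j)%N)) /=; congr (_ + _).
  rewrite (bigID (fun j : 'I_k => (j < i)%N)) /=.
  rewrite [X in _ + X]big1 ?addr0; last first.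
    move=> j /andP[h1 h2]; have -> : j = i by apply/val_inj/eqP; rewrite /= eqn_leq; apply/andP; split; rewrite leqNgt.
    exact: hd.
  by apply: eq_bigl => j; case: (ltngtP i j).
rewrite (eq_bigr _ (fun i _ => e i)) big_split /=.
rewrite (exchange_big_dep xpredT) //=.
rewrite mulr2n mulrDl mul1r; congr (_ + _).
by apply: eq_bigr => i _; apply: eq_bigr => j _; rewrite hs.
Qed.

Theorem propositionA1 (R : realType) (k : nat) (hk : (2 <= k)%N)
  (u c : 'I_k -> R)
  (hu : exists i j : 'I_k, u i != u j)
  (a b : R)
  (hopt : forall a' b' : R, lsq_obj u c a b <= lsq_obj u c a' b') :
  a <= zeta u * max_abs c /\
  b = - (k%:R)^-1 * (\sum_(i < k) c i) - a / k%:R * (\sum_(i < k) u i).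
Proof.
set r := fun i => a * u i + b + c i.
have hk0 : 0 < k%:R :> R by rewrite ltr0n; apply: leq_trans hk.
have hS : \sum_(i < k) r i * 1 = 0.
  apply: (@quad0 R _ k%:R hk0) => t; have := hopt a (b + t).
  have -> : lsq_obj u c a b = \sum_(i < k) r i ^+ 2 by [].
  rewrite /lsq_obj.
  rewrite [X in _ <= X](eq_bigr (fun i => (r i + t * 1) ^+ 2)); last by move=> i _; rewrite /r; ring.
  rewrite sum_sq_shift.
  have -> : \sum_(i < k) (1:R) ^+ 2 = k%:R.
    by rewrite (eq_bigr (fun _ => 1)) ?sumr_const ?card_ord // => i _; rewrite expr1n.
  by rewrite -addrA lerDl.
have hQ : 0 < \sum_(i < k) u i ^+ 2.
  case: hu => i [j hij].
  have [hi|hi] := eqVneq (u i) 0.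
  - have hj : u j != 0 by rewrite -hi eq_sym.
    rewrite (bigD1 j) //= ltr_pwDl //; last by apply: sumr_ge0 => l _; exact: sqr_ge0.
    by rewrite exprn_even_gt0 //.
  - rewrite (bigD1 i) //= ltr_pwDl //; last by apply: sumr_ge0 => l _; exact: sqr_ge0.
    by rewrite exprn_even_gt0 //.
have hT : \sum_(i < k) r i * u i = 0.
  apply: (@quad0 R _ _ hQ) => t; have := hopt (a + t) b.
  have -> : lsq_obj u c a b = \sum_(i < k) r i ^+ 2 by [].
  rewrite /lsq_obj.
  rewrite [X in _ <= X](eq_bigr (fun i => (r i + t * u i) ^+ 2)); last by move=> i _; rewrite /r; ring.
  by rewrite sum_sq_shift -addrA lerDl.
split; last first.
  move: hS; rewrite (eq_bigr (fun i => a * u i + b + c i)); last by move=> i _; rewrite mulr1.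
  rewrite !big_split /= -mulr_sumr sumr_const card_ord => h.
  have hk' : k%:R != 0 :> R by rewrite gt_eqF.
  rewrite -mulr_natr in h.
  have hb : b = (- \sum_(i < k) c i - a * \sum_(i < k) u i) / k%:R.
    apply: (mulIf hk'); rewrite mulfVK //.
    apply/eqP; rewrite -subr_eq0; apply/eqP; rewrite -[RHS]h; ring.
  by rewrite {1}hb; field.
have e : forall i, \sum_(j < k) (u i - u j) * (r i - r j) =
     k%:R * (r i * u i) - (r i * 1) * \sum_(j < k) u j.
  move=> i.
  rewrite (eq_bigr (fun j => u i * r i + (- u i) * (r j * 1) + (- r i) * u j + r j * u j)); last by move=> j _; ring.
  rewrite !big_split /= sumr_const card_ord -!mulr_sumr hS hT -mulr_natl; ring.
have hfull : \sum_(i < k) \sum_(j < k) (u i - u j) * (r i - r j) = 0.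
  rewrite (eq_bigr _ (fun i _ => e i)) sumrB -mulr_sumr -mulr_suml hS hT; ring.
rewrite half_sum in hfull; last 2 first.
- by move=> i j; ring.
- by move=> i; ring.
set D := \sum_(i < k) \sum_(j < k | (i < j)%N) (u i - u j) ^+ 2.
set C := \sum_(i < k) \sum_(j < k | (i < j)%N) (u i - u j) * (c i - c j).
set N := \sum_(i < k) \sum_(j < k | (i < j)%N) `|u i - u j|.
set M := max_abs c.
have hsum : \sum_(i < k) \sum_(j < k | (i < j)%N) (u i - u j) * (r i - r j) = a * D + C.
  rewrite /D /C mulr_sumr -big_split /=; apply: eq_bigr => i _.
  rewrite mulr_sumr -big_split /=; apply: eq_bigr => j _; rewrite /r; ring.
have haD : a * D = - C.
  move: hfull; rewrite hsum => /eqP; rewrite mulf_eq0 pnatr_eq0 /= => /eqP h.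
  by apply/eqP; rewrite -subr_eq0 opprK h.
have hD : 0 < D.
  have h2 : 0 < 2 * D.
    rewrite -half_sum; last 2 first.
    - by move=> i j; ring.
    - by move=> i; ring.
    case: hu => i [j hij].
    have hpos : forall x y : 'I_k, 0 <= \sum_(y0 < k) (u x - u y0) ^+ 2.
      by move=> x _; apply: sumr_ge0 => l _; exact: sqr_ge0.
    rewrite (bigD1 i) //=; apply: ltr_wpDr; first by apply: sumr_ge0 => l _; apply: sumr_ge0 => m _; exact: sqr_ge0.
    rewrite (bigD1 j) //=; apply: ltr_wpDr; first by apply: sumr_ge0 => l _; exact: sqr_ge0.
    by rewrite exprn_even_gt0 // subr_eq0.
  by rewrite pmulr_rgt0 in h2.
have hC : - C <= N * (2 * M).
  rewrite /C /N -sumrN mulr_suml; apply: ler_sum => i _.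
  rewrite -sumrN mulr_suml; apply: ler_sum => j _.
  apply: (le_trans (ler_norm _)); rewrite normrN normrM ler_wpM2l //.
  apply: (le_trans (ler_normB _ _)); rewrite mulr2n mulrDl mul1r.
  by apply: lerD; apply: max_abs_ge.
rewrite /zeta -/N -/D mulrAC ler_pdivlMr // haD.
apply: (le_trans hC); rewrite le_eqVlt; apply/orP; left; apply/eqP; ring.
Qed.
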